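(* Let $K$ be a number field, let $X\subseteq M_d(K)$ be closed in the linear Zariski topology, let $\mathcal S=\langle X\rangle$, and let $R\subseteq\mathcal S$ be a set of completely pseudo-regular matrices. (1) If $A,B\in R$ lie in the same strongly connected component of $G(R)$, then $A\sim_{\mathcal S}B$. (2) For every $r$, the graph $G(R)$ has at most $\binom{d}{r}$ strongly connected components consisting of matrices of rank $r$.
   Context: A matrix $C$ is completely pseudo-regular if it lies in a subgroup of the multiplicative semigroup $M_d(K)$ (equivalently $\operatorname{im}C\cap\ker C=0$). $G(R)$ is the directed graph with vertex set $R$ and a directed edge $A\to B$ whenever $\ker(B)\cap\operatorname{im}(A)=0$ (loops allowed). For $P,Q\in M_d(K)$ write $P\parallel Q$ if $\operatorname{im}P=\operatorname{im}Q$ and $\ker P=\ker Q$; for $P,Q\in\mathcal S$, $P\sim_{\mathcal S}Q$ means there exist $C,D,C',D'\in\mathcal S\cup\{I\}$ with $Q\parallel DPC$ and $P\parallel D'QC'$. *)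

(* Defs.v *)
From HB Require Import structures.
From mathcomp Require Import all_boot all_order all_algebra all_field.
Set Implicit Arguments. Unset Strict Implicit. Unset Printing Implicit Defensive.
Import GRing.Theory.
Local Open Scope ring_scope.

(* Matrices act on COLUMN vectors, as in the paper.  In MathComp's row-space
   language: the column space im A is the row space of A^T, and
   ker A = {v | A v = 0} corresponds to kermx A^T. *)
Section Defs.
Variables (K : fieldType) (d : nat).
Local Notation M := 'M[K]_d.

Definition mx_im (A : M) : M := A^T.
Definition mx_ker (A : M) : M := kermx A^T.

(* Linear Zariski topology: closed sets are finite unions of affine
   subspaces P + W of M_d(K), W a K-linear subspace (encoded via mxvec). *)
Definition linZariski_closed (X : M -> Prop) : Prop :=
  exists s : seq (M * 'M[K]_(d * d)),
    forall A, X A <-> has (fun p => (mxvec (A - p.1) <= p.2)%MS) s.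

Inductive gen_semigroup (X : M -> Prop) : M -> Prop :=
| gen_base A : X A -> gen_semigroup X A
| gen_mul A B : gen_semigroup X A -> gen_semigroup X B -> gen_semigroup X (A *m B).

Definition completely_pseudo_regular (C : M) : Prop :=
  exists (G : M -> Prop) (e : M),
    [/\ G C, G e,
        (forall x y, G x -> G y -> G (x *m y)),
        (forall x, G x -> e *m x = x /\ x *m e = x) &
        (forall x, G x -> exists y, [/\ G y, x *m y = e & y *m x = e])].

Definition mx_parallel (P Q : M) : Prop :=
  (mx_im P == mx_im Q)%MS /\ (mx_ker P == mx_ker Q)%MS.

Definition sim_S (S : M -> Prop) (P Q : M) : Prop :=
  exists C D C' D' : M,
    [/\ S C \/ C = 1%:M, S D \/ D = 1%:M, S C' \/ C' = 1%:M & S D' \/ D' = 1%:M] /\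
    mx_parallel Q (D *m P *m C) /\ mx_parallel P (D' *m Q *m C').

Definition GR_edge (R : M -> Prop) (A B : M) : Prop :=
  [/\ R A, R B & (mx_ker B :&: mx_im A == (0 : M))%MS].

Inductive GR_reach (R : M -> Prop) : M -> M -> Prop :=
| reach_refl A : R A -> GR_reach R A A
| reach_step A B C : GR_edge R A B -> GR_reach R B C -> GR_reach R A C.

Definition same_scc (R : M -> Prop) (A B : M) : Prop :=
  GR_reach R A B /\ GR_reach R B A.

End Defs.

(* Main.v *)
Require Import Defs.
From HB Require Import structures.
From mathcomp Require Import all_boot all_order all_algebra all_field all_fingroup zify.
Set Implicit Arguments. Unset Strict Implicit. Unset Printing Implicit Defensive.
Import GRing.Theory.
Local Open Scope ring_scope.
Section Part1.
Variables (F : fieldType) (d : nat).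
Local Notation M := 'M[F]_d.

Lemma inj_on (D Z Y : M) : (Y^T <= Z^T)%MS -> \rank (D *m Z) = \rank Z ->
  \rank (D *m Y) = \rank Y.
Proof.
move=> sYZ rDZ.
have capZ: \rank (Z^T :&: kermx D^T) = 0%N.
  have := mxrank_mul_ker Z^T D^T; rewrite -trmx_mul !mxrank_tr rDZ; lia.
have capY: \rank (Y^T :&: kermx D^T) = 0%N.
  apply/eqP; rewrite -leqn0 -capZ; apply: mxrankS; exact: capmxS.
have := mxrank_mul_ker Y^T D^T; rewrite capY addn0 -trmx_mul !mxrank_tr //.
Qed.

Lemma cap0_rank m n (Y : 'M[F]_(m, n)) : (Y == (0 : 'M_(m, n)))%MS -> \rank Y = 0%N.
Proof. by move=> /eqmx_rank ->; rewrite mxrank0. Qed.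

Lemma edge_rank (A B : M) : (mx_ker B :&: mx_im A == (0 : M))%MS ->
  \rank (B *m A) = \rank A.
Proof.
rewrite /mx_ker /mx_im capmxC => /cap0_rank H.
have := mxrank_mul_ker A^T B^T; rewrite H addn0 -trmx_mul !mxrank_tr //.
Qed.

Lemma cpr_rank (A : M) : completely_pseudo_regular A -> \rank (A *m A) = \rank A.
Proof.
case=> G [e [GA Ge Gmul Gid Ginv]].
have [y [Gy Ay yA]] := Ginv A GA. have [eA _] := Gid A GA.
apply/eqP; rewrite eqn_leq mxrankM_maxl /=.
rewrite -{1}eA -yA -mulmxA; exact: mxrankM_maxr.
Qed.

Lemma cpr_cap (A : M) : completely_pseudo_regular A ->
  (\rank (mx_ker A :&: mx_im A) = 0)%N.
Proof.
move/cpr_rank=> H; rewrite /mx_ker /mx_im capmxC.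
have := mxrank_mul_ker A^T A^T; rewrite -trmx_mul !mxrank_tr H; lia.
Qed.

Lemma reach_trans (R : M -> Prop) A B C :
  GR_reach R A B -> GR_reach R B C -> GR_reach R A C.
Proof.
elim=> [A0 _ H | A0 A1 B0 e _ IH H] //; exact: reach_step e (IH H).
Qed.

Variables (R S : M -> Prop).
Hypothesis HRS : forall A, R A -> S A.
Hypothesis Smul : forall A B, S A -> S B -> S (A *m B).

Lemma reach_D A B : GR_reach R A B -> exists D, (S D \/ D = 1%:M) /\
  \rank (D *m A) = \rank A /\ (mx_im (D *m A) <= mx_im B)%MS.
Proof.
elim=> {A B} [A RA | A A1 B [RA RA1 cap] _ [D1 [SD1 [rD1 iD1]]]].
  by exists 1%:M; split; [right|rewrite mul1mx; split => //; exact: submx_refl].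
exists (D1 *m A1); split.
  left; case: SD1 => [SD1|->]; first by apply: Smul => //; exact: HRS.
  by rewrite mul1mx; exact: HRS.
split.
  have e1 := edge_rank cap.
  have s1 : ((A1 *m A)^T <= A1^T)%MS by rewrite (trmx_mul A1 A); exact: submxMl.
  by rewrite -mulmxA (inj_on s1 rD1) e1.
by rewrite /mx_im trmx_mul; apply: submx_trans (submxMl _ _) iD1.
Qed.

Lemma reach_R A B : GR_reach R A B -> R A.
Proof. by case=> // ? ? ? []. Qed.

Lemma reach_rank A B : GR_reach R A B -> (\rank A <= \rank B)%N.
Proof.
case/reach_D=> D [_ [rD iD]]; rewrite -rD -mxrank_tr -(mxrank_tr B).
exact: mxrankS.
Qed.

Lemma half A B : (forall A, R A -> completely_pseudo_regular A) ->
  same_scc R A B -> exists C D, (S C \/ C = 1%:M) /\ (S D \/ D = 1%:M) /\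
  mx_parallel B (D *m A *m C).
Proof.
move=> Hcpr [rAB rBA].
have RA := reach_R rAB; have RB := reach_R rBA.
have eqr : \rank A = \rank B by apply/eqP; rewrite eqn_leq !reach_rank.
have [D1 [SD1 [rD1 iD1]]] := reach_D rAB.
have [C1 [SC1 [rC1 iC1]]] := reach_D rBA.
exists (C1 *m B), D1; split.
  left; case: SC1 => [SC1|->]; first by apply: Smul => //; exact: HRS.
  by rewrite mul1mx; exact: HRS.
split => //.
have r1 : \rank (A *m (C1 *m B)) = \rank (C1 *m B).
  by apply: (inj_on (Z:=A)) => //; apply: cpr_rank; exact: Hcpr.
have r2 : \rank (D1 *m (A *m (C1 *m B))) = \rank (A *m (C1 *m B)).
  by apply: (inj_on (Z:=A)) => //; rewrite trmx_mul; exact: submxMl.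
have rZ : \rank (D1 *m A *m (C1 *m B)) = \rank B by rewrite -mulmxA r2 r1 rC1.
have imZ : ((D1 *m A *m (C1 *m B))^T <= B^T)%MS.
  by rewrite trmx_mul; apply: submx_trans (submxMl _ _) iD1.
split.
  apply/eqmxP/eqmx_sym/eqmxP.
  by rewrite -(geq_leqif (mxrank_leqif_eq imZ)) !mxrank_tr rZ.
have sK : (kermx B^T <= kermx (D1 *m A *m (C1 *m B))^T)%MS.
  have eZ : D1 *m A *m (C1 *m B) = (D1 *m A *m C1) *m B by rewrite mulmxA.
  by apply/sub_kermxP; rewrite eZ trmx_mul mulmxA mulmx_ker mul0mx.
rewrite /mx_ker -(geq_leqif (mxrank_leqif_eq sK)) !mxrank_ker !mxrank_tr rZ //.
Qed.

End Part1.

Section CB.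
Variables (F : fieldType) (d r : nat).

Definition Tset := [set t : r.-tuple 'I_d | sorted ltn [seq val i | i <- t]].
Definition pv (P : 'M[F]_(d, r)) (k : 'I_#|Tset|) : F :=
  \det (rowsub (tnth (enum_val k)) P).
Definition Expr (phi : 'M[F]_(d, r) -> F) :=
  exists v : 'I_#|Tset| -> F, forall P, phi P = \sum_k v k * pv P k.

Lemma Expr0 : Expr (fun _ => 0).
Proof. by exists (fun _ => 0) => P; rewrite big1 // => k _; rewrite mul0r. Qed.

Lemma ExprD f g : Expr f -> Expr g -> Expr (fun P => f P + g P).
Proof.
move=> [v1 H1] [v2 H2]; exists (fun k => v1 k + v2 k) => P.
by rewrite H1 H2 -big_split; apply: eq_bigr => k _; rewrite mulrDl.
Qed.

Lemma Expr_ext f g : (forall P, f P = g P) -> Expr f -> Expr g.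
Proof. by move=> fg [v H]; exists v => P; rewrite -fg. Qed.

Lemma Expr_sum (I : finType) (G : I -> 'M[F]_(d, r) -> F) :
  (forall i, Expr (G i)) -> Expr (fun P => \sum_i G i P).
Proof.
move=> HG.
suff: forall s, Expr (fun P => \sum_(i <- s) G i P) by apply.
elim=> [|i s IH]; first by apply: Expr_ext Expr0 => P; rewrite big_nil.
by apply: Expr_ext (ExprD (HG i) IH) => P; rewrite big_cons.
Qed.

Lemma det_expand (Q : 'M[F]_(r, d)) (P : 'M[F]_(d, r)) :
  \det (Q *m P) = \sum_(f : {ffun 'I_r -> 'I_d})
     (\prod_i Q i (f i)) * \det (rowsub f P).
Proof.
transitivity (\sum_(s : 'S_r) \sum_(f : {ffun 'I_r -> 'I_d})
   (\prod_i Q i (f i)) * ((-1) ^+ s * \prod_i P (f i) (s i))).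
  apply: eq_bigr => s _.
  rewrite (eq_bigr (fun i => \sum_k Q i k * P k (s i))); last by move=> i _; rewrite mxE.
  rewrite bigA_distr_bigA big_distrr; apply: eq_bigr => f _ /=.
  by rewrite big_split /= mulrCA.
rewrite exchange_big; apply: eq_bigr => f _ /=; rewrite big_distrr /=.
apply: eq_bigr => s _; congr (_ * (_ * _)); apply: eq_bigr => i _.
by rewrite mxE.
Qed.

Lemma rowsub_sort (g : 'I_r -> 'I_d) :
  (forall P : 'M[F]_(d, r), \det (rowsub g P) = 0) \/
  exists t, t \in Tset /\ exists c : F, forall P : 'M[F]_(d, r),
    \det (rowsub g P) = c * \det (rowsub (tnth t) P).
Proof.
case: (boolP [exists i1, exists i2, (i1 != i2) && (g i1 == g i2)]).
  case/existsP => i1 /existsP [i2 /andP [ne /eqP e]]; left => P.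
  by apply: (determinant_alternate ne) => j; rewrite !mxE e.
move=> /negP ninj.
have ginj : injective g.
  move=> x y e; case: (eqVneq x y) => // ne; exfalso; apply: ninj.
  by apply/existsP; exists x; apply/existsP; exists y; rewrite ne e eqxx.
right.
pose ft := [tuple g i | i < r].
pose le := fun i j : 'I_d => (i <= j)%N.
pose t := sort_tuple le ft.
have pe : perm_eq ft t by rewrite perm_sym /t /= perm_sort.
have [p Hp] := tuple_permP pe.
have gE i : g i = tnth t (p i).
  by have := congr1 (fun u => tnth u i) (val_inj Hp); rewrite !tnth_mktuple.
exists t; split.
  rewrite inE ltn_sorted_uniq_leq; apply/andP; split.
    rewrite (map_inj_uniq val_inj) -(perm_uniq pe).
    by apply/tuple_uniqP => x y; rewrite !tnth_mktuple; exact: ginj.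
  by rewrite sorted_map; apply: sort_sorted => i j; exact: leq_total.
exists ((-1) ^+ p) => P.
have -> : rowsub g P = row_perm p (rowsub (tnth t) P).
  by apply/matrixP => i j; rewrite !mxE gE.
by rewrite row_permE det_mulmx det_perm.
Qed.

Lemma Expr_term (w : F) (g : 'I_r -> 'I_d) : Expr (fun P => w * \det (rowsub g P)).
Proof.
case: (rowsub_sort g) => [H | [t [tT [c H]]]].
  by apply: Expr_ext Expr0 => P; rewrite H mulr0.
exists (fun k => if k == enum_rank_in tT t then w * c else 0) => P.
rewrite (bigD1 (enum_rank_in tT t)) //= eqxx big1 ?addr0 => [|k /negPf ->]; last by rewrite mul0r.
by rewrite /pv enum_rankK_in // H mulrA.
Qed.

Lemma Expr_det (Q : 'M[F]_(r, d)) : Expr (fun P => \det (Q *m P)).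
Proof.
apply: Expr_ext (Expr_sum (fun f : {ffun 'I_r -> 'I_d} => Expr_term (\prod_i Q i (f i)) f)).
by move=> P; rewrite det_expand.
Qed.
End CB.

Section Final.
Variables (F : fieldType) (d : nat).

Lemma factor (A : 'M[F]_d) r : \rank A = r ->
  exists P : 'M[F]_(d, r), exists Q : 'M[F]_(r, d), A = P *m Q.
Proof. by move=> <-; exists (col_base A), (row_base A); rewrite mulmx_base. Qed.

Lemma link (A A' : 'M[F]_d) r (P P' : 'M[F]_(d, r)) (Q Q' : 'M[F]_(r, d)) :
  \rank A = r -> \rank A' = r -> A = P *m Q -> A' = P' *m Q' ->
  ((mx_ker A' :&: mx_im A == (0 : 'M_d))%MS <-> \det (Q' *m P) != 0).
Proof.
move=> rA rA' eA eA'.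
have sA : (A^T <= P^T)%MS by rewrite eA trmx_mul; exact: submxMl.
have imA : (A^T == P^T)%MS.
  by rewrite -(geq_leqif (mxrank_leqif_eq sA)) !mxrank_tr rA rank_leq_col.
have rQ : \rank Q'^T = r.
  apply/eqP; rewrite eqn_leq rank_leq_col -{1}rA' -mxrank_tr eA' trmx_mul.
  exact: mxrankM_maxl.
have sK : (kermx Q'^T <= kermx A'^T)%MS.
  by apply/sub_kermxP; rewrite eA' trmx_mul mulmxA mulmx_ker mul0mx.
have kA : (kermx Q'^T == kermx A'^T)%MS.
  by rewrite -(geq_leqif (mxrank_leqif_eq sK)) !mxrank_ker mxrank_tr rA' rQ.
have rc : \rank (kermx A'^T :&: A^T) = \rank (P^T :&: kermx Q'^T).
  rewrite capmxC; apply: eqmx_rank; apply/eqmxP.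
  exact: cap_eqmx (eqmxP imA) (eqmx_sym (eqmxP kA)).
have rP : \rank P^T = r by rewrite -(eqmx_rank imA) mxrank_tr.
have := mxrank_mul_ker P^T Q'^T; rewrite rP -trmx_mul mxrank_tr.
rewrite /mx_ker /mx_im sub0mx andbT submx0 -mxrank_eq0 rc.
rewrite -unitfE -unitmxE -row_free_unit /row_free => H.
have -> : (\rank (P^T :&: kermx Q'^T) == 0%R) = (\rank (P^T :&: kermx Q'^T) == 0%N) by [].
split => /eqP E; apply/eqP; move: H E;
  move: (\rank (Q' *m P)) (\rank (P^T :&: kermx Q'^T)) => a c /=.
  by move=> H E; change (a = r :> nat); lia.
by move=> H E; change (c = 0 :> nat); lia.
Qed.

Lemma part2 (R : 'M[F]_d -> Prop) :
  (forall A, R A -> completely_pseudo_regular A) ->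
  forall (r : nat) (s : seq 'M[F]_d),
      (forall A, A \in s -> R A /\ \rank A = r) ->
      (forall i j, (i < size s)%N -> (j < size s)%N -> i <> j ->
         ~ same_scc R (nth 0 s i) (nth 0 s j)) ->
      (size s <= 'C(d, r))%N.
Proof.
move=> Hcpr r s Hs Hd.
pose A (i : 'I_(size s)) := nth 0 s i.
have As i : A i \in s := mem_nth 0 (ltn_ord i).
have [PQ HPQ] : exists PQ : 'I_(size s) -> 'M[F]_(d, r) * 'M[F]_(r, d),
    forall i, A i = (PQ i).1 *m (PQ i).2.
  apply: (@fin_all_exists _ (fun _ => ('M[F]_(d, r) * 'M[F]_(r, d))%type)
    (fun i (PQ : 'M[F]_(d, r) * 'M[F]_(r, d)) => A i = PQ.1 *m PQ.2)) => i; have [_ rA] := Hs _ (As i).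
  by have [P [Q e]] := factor rA; exists (P, Q).
have [v Hv] : exists v : 'I_(size s) -> ('I_#|Tset d r| -> F),
    forall j P, \det ((PQ j).2 *m P) = \sum_k v j k * pv P k.
  apply: (@fin_all_exists _ (fun _ => 'I_#|Tset d r| -> F)
    (fun j (w : 'I_#|Tset d r| -> F) => forall P, \det ((PQ j).2 *m P) = \sum_k w k * pv P k)) => j.
  exact: Expr_det.
pose Mat := \matrix_(i, j) \det ((PQ j).2 *m (PQ i).1) : 'M[F]_(size s).
have lk i j : (mx_ker (A j) :&: mx_im (A i) == (0 : 'M_d))%MS <-> Mat i j != 0.
  rewrite mxE; apply: link; [exact: (Hs _ (As i)).2 | exact: (Hs _ (As j)).2 | exact: HPQ | exact: HPQ].
have edge i j : Mat i j != 0 -> GR_edge R (A i) (A j).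
  by move=> nz; split; [exact: (Hs _ (As i)).1 | exact: (Hs _ (As j)).1 | exact/(lk i j)].
have diag i : Mat i i != 0.
  apply/(lk i i); rewrite sub0mx andbT submx0 -mxrank_eq0 cpr_cap //.
  exact: Hcpr (Hs _ (As i)).1.
have reachit (sg : 'S_(size s)) : (forall i, Mat i (sg i) != 0) ->
    forall n i, GR_reach R (A i) (A (iter n sg i)).
  move=> H; elim=> [|n IH] i /=; first exact: reach_refl (Hs _ (As i)).1.
  apply: reach_trans (IH i) _; apply: reach_step (edge _ _ (H _)) _.
  exact: reach_refl (Hs _ (As _)).1.
have detnz : \det Mat != 0.
  rewrite /determinant (bigD1 (1%g : 'S_(size s))) //= [X in _ + X]big1 ?addr0 => [|sg sg1].
    rewrite odd_perm1 expr0 mul1r; apply/prodf_neq0 => i _; rewrite perm1.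
    exact: diag.
  case: (boolP [forall i, Mat i (sg i) != 0]) => [/forallP H|/forallPn [i /negPn /eqP Hi]];
    last by rewrite (bigD1 i) //= Hi mul0r mulr0.
  exfalso.
  have [i0 Hi0] : exists i0, sg i0 != i0.
    case: (boolP [exists i, sg i != i]) => [/existsP //|/existsPn Hn].
    case/eqP: sg1; apply/permP => i; rewrite perm1; apply/eqP.
    by have := Hn i; rewrite negbK.
  apply: (Hd i0 (sg i0)) => //.
    by move=> /val_inj e; rewrite -e eqxx in Hi0.
  split; first exact: (reachit sg H 1%N i0).
  have := reachit sg H (#[sg]%g.-1) (sg i0).
  by rewrite -iterSr prednK ?order_gt0 // -permX expg_order perm1.
have rk : size s = \rank Mat by rewrite mxrank_unit // unitmxE unitfE.
pose Mp := \matrix_(i, k) pv (PQ i).1 k : 'M[F]_(size s, #|Tset d r|).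
pose Mv := \matrix_(j, k) v j k : 'M[F]_(size s, #|Tset d r|).
have eM : Mat = Mp *m Mv^T.
  apply/matrixP => i j; rewrite !mxE Hv; apply: eq_bigr => k _.
  by rewrite !mxE mulrC.
have cT : #|Tset d r| = 'C(d, r) := card_ltn_sorted_tuples r d.
rewrite -cT rk eM; apply: leq_trans (mxrankM_maxl _ _) (rank_leq_col _).
Qed.
End Final.

Theorem lemmaV16 (K : fieldExtType rat) (d : nat)
    (X : 'M[K]_d -> Prop) (R : 'M[K]_d -> Prop) :
  linZariski_closed X ->
  (forall A, R A -> gen_semigroup X A) ->
  (forall A, R A -> completely_pseudo_regular A) ->
  (forall A B, same_scc R A B -> sim_S (gen_semigroup X) A B) /\
  (forall (r : nat) (s : seq 'M[K]_d),
      (forall A, A \in s -> R A /\ \rank A = r) ->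
      (forall i j, (i < size s)%N -> (j < size s)%N -> i <> j ->
         ~ same_scc R (nth 0 s i) (nth 0 s j)) ->
      (size s <= 'C(d, r))%N).
Proof.
move=> _ HRS Hcpr; split; last exact: part2.
move=> A B scc.
have Smul : forall A B, gen_semigroup X A -> gen_semigroup X B ->
  gen_semigroup X (A *m B) by move=> ? ?; exact: gen_mul.
have [C [D [SC [SD p1]]]] := half HRS Smul Hcpr scc.
have [C' [D' [SC' [SD' p2]]]] := half HRS Smul Hcpr (conj scc.2 scc.1).
by exists C, D, C', D'; split.
Qed.
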